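(* Consider the discrete-time system $x(t+1) = A x(t) + B u(t)$ with $A \in \mathbb{R}^{d_x \times d_x}$, $B \in \mathbb{R}^{d_x \times d_u}$, control constraint $\mathcal U = \{u \in \mathbb{R}^{d_u} \mid \underline u \leq u \leq \overline u\}$ (with $\underline u \leq \overline u$) and state constraint $\mathcal X = \{x \in \mathbb{R}^{d_x} \mid \underline x \leq x \leq \overline x\}$. Let $T \geq 0$ be an integer. Let $G_{\mathcal I} \in \mathbb{R}^{d_x\times n_{\mathcal I}}$, $\alpha \in \mathbb{R}^{d_x}$, $\gamma\in\mathbb{R}^{n_{\mathcal I}}$ with $\gamma \geq 0$, $\Gamma = \mathrm{diag}(\gamma)$, $\mathcal I = \langle \alpha \mid G_{\mathcal I}\Gamma\rangle$, and let $\beta(t) \in \mathbb{R}^{d_u}$, $\Phi(t) \in \mathbb{R}^{d_u \times n_{\mathcal I}}$ for $t = 0,\ldots,T-1$. Suppose that for all $t = 0,\ldots,T$ \[ A^t\alpha + \sum_{s=0}^{t-1}A^{t-1-s}B\beta(s) - \Big|A^tG_{\mathcal I}\Gamma + \sum_{s=0}^{t-1}A^{t-1-s}B\Phi(s)\Big|\mathbf{1}_{n_{\mathcal I}} \geq \underline x, \] \[ A^t\alpha + \sum_{s=0}^{t-1}A^{t-1-s}B\beta(s) + \Big|A^tG_{\mathcal I}\Gamma + \sum_{s=0}^{t-1}A^{t-1-s}B\Phi(s)\Big|\mathbf{1}_{n_{\mathcal I}} \leq \overline x, \] and that for all $t = 0,\ldots,T-1$ \[ \beta(t) - |\Phi(t)|\mathbf{1}_{n_{\mathcal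 I}} \geq \underline u, \qquad \beta(t) + |\Phi(t)|\mathbf{1}_{n_{\mathcal I}} \leq \overline u. \] Then $\mathcal I \subseteq \mathrm{Viab}_{[0,T]}(\mathcal X)$, where $\mathrm{Viab}_{[0,T]}(\mathcal X)$ is the set of $x(0) \in \mathcal X$ for which there exists an input signal with $u(t) \in \mathcal U$ for $t = 0,\ldots,T$ such that the resulting trajectory satisfies $x(t)\in\mathcal X$ for all $t = 0,\ldots,T$.
   Context: Vector inequalities are elementwise; $|M|$ is the elementwise absolute value; $\mathbf{1}_n$ is the all-ones vector in $\mathbb{R}^n$. The notation $\langle c \mid G\rangle$ denotes the zonotope $\{c + G\lambda : \lambda \in [-1,1]^n\}$. $\mathrm{diag}(\gamma)$ is the diagonal matrix with $\gamma$ on its diagonal. *)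

(* Defs.v *)
From mathcomp Require Import all_boot all_order all_algebra.
Set Implicit Arguments. Unset Strict Implicit. Unset Printing Implicit Defensive.
Import Order.TTheory GRing.Theory Num.Theory.
Local Open Scope ring_scope.

Definition vle (R : realFieldType) (n : nat) (x y : 'cV[R]_n) : Prop :=
  forall i : 'I_n, x i 0 <= y i 0.

Definition mxabs (R : realFieldType) (m n : nat) (M : 'M[R]_(m, n)) : 'M[R]_(m, n) :=
  map_mx (fun x => `|x|) M.

Definition ones (R : realFieldType) (n : nat) : 'cV[R]_n := const_mx 1.

Definition diagv (R : realFieldType) (n : nat) (g : 'cV[R]_n) : 'M[R]_n :=
  diag_mx g^T.

Definition zonotope (R : realFieldType) (d n : nat) (c : 'cV[R]_d) (G : 'M[R]_(d, n))
  : 'cV[R]_d -> Prop :=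
  fun x => exists lam : 'cV[R]_n,
      (forall i : 'I_n, -1 <= lam i 0 <= 1) /\ x = c + G *m lam.

Definition box (R : realFieldType) (n : nat) (lo hi : 'cV[R]_n) : 'cV[R]_n -> Prop :=
  fun x => vle lo x /\ vle x hi.

Fixpoint traj (R : realFieldType) (dx du : nat) (A : 'M[R]_dx) (B : 'M[R]_(dx, du))
  (x0 : 'cV[R]_dx) (u : nat -> 'cV[R]_du) (t : nat) : 'cV[R]_dx :=
  match t with
  | 0 => x0
  | t'.+1 => A *m traj A B x0 u t' + B *m u t'
  end.

Definition viab (R : realFieldType) (dx du : nat) (A : 'M[R]_dx) (B : 'M[R]_(dx, du))
  (U : 'cV[R]_du -> Prop) (X : 'cV[R]_dx -> Prop) (T : nat) : 'cV[R]_dx -> Prop :=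
  fun x0 => X x0 /\ exists u : nat -> 'cV[R]_du,
      (forall t, (t <= T)%N -> U (u t)) /\
      (forall t, (t <= T)%N -> X (traj A B x0 u t)).

Arguments ones {R} n.

(* Main.v *)
Require Import Defs.
From mathcomp Require Import all_boot all_order all_algebra.
From mathcomp Require Import zify.
From Stdlib Require Import Lia.
From mathcomp Require Import lra.
Import Order.TTheory GRing.Theory Num.Theory.
Local Open Scope ring_scope.

Section H.
Variables (R : realFieldType) (dx du : nat) (A : 'M[R]_dx) (B : 'M[R]_(dx, du)).

Definition Ssum k (t : nat) (f : nat -> 'M[R]_(du, k)) : 'M[R]_(dx, k) :=
  \sum_(s < t) (A ^+ (t - 1 - s)%N *m B *m f s).

Arguments Ssum {k}.
Lemma SsumS k t (f : nat -> 'M[R]_(du, k)) : Ssum t.+1 f = A *m Ssum t f + B *m f t.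
Proof.
rewrite /Ssum big_ord_recr /= subn1 /= subnn expr0 mul1mx.
idtac.
congr (_ + _). rewrite mulmx_sumr; apply: eq_bigr => s _.
have hs := ltn_ord s.
have -> : (t - s = (t - 1 - s).+1)%N by lia.
by rewrite exprS !mulmxA.
Qed.

Lemma traj_formula x0 u t :
  traj A B x0 u t = A ^+ t *m x0 + Ssum t u.
Proof.
elim: t => [|t IH] /=; first by rewrite /Ssum big_ord0 expr0 mul1mx addr0.
by rewrite IH SsumS mulmxDr exprS mulmxA addrA.
Qed.

Lemma Ssum_lin t (beta : nat -> 'cV[R]_du) k (Phi : nat -> 'M[R]_(du,k)) lam :
  Ssum t (fun s => beta s + Phi s *m lam) = Ssum t beta + Ssum t Phi *m lam.
Proof.
rewrite /Ssum mulmx_suml -big_split /=; apply: eq_bigr => s _.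
by rewrite mulmxDr mulmxA.
Qed.

Lemma traj_ext x0 u v t : (forall s, (s < t)%N -> u s = v s) ->
  traj A B x0 u t = traj A B x0 v t.
Proof.
elim: t => [|t IH] //= H.
by rewrite IH ?H // => s hs; apply: H; lia.
Qed.
End H.

Lemma abs_bound (R : realFieldType) m k (M : 'M[R]_(m,k)) (lam : 'cV[R]_k) i :
  (forall j : 'I_k, -1 <= lam j 0 <= 1) ->
  `|(M *m lam) i 0| <= (mxabs M *m ones k) i 0.
Proof.
move=> hl; rewrite !mxE.
apply: (le_trans (ler_norm_sum _ _ _)); apply: ler_sum => j _.
rewrite !mxE mulr1 normrM ler_piMr //.
by rewrite ler_norml; case/andP: (hl j).
Qed.

Arguments abs_bound {R m k}.
Lemma box_of (R : realFieldType) m k (c : 'cV[R]_m) (M : 'M[R]_(m,k)) (lam : 'cV[R]_k) lo hi :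
  (forall j : 'I_k, -1 <= lam j 0 <= 1) ->
  vle lo (c - mxabs M *m ones k) -> vle (c + mxabs M *m ones k) hi ->
  box lo hi (c + M *m lam).
Proof.
move=> hl h1 h2; split=> i;
  move: (h1 i) (h2 i) (abs_bound M lam i hl);
  set X := (mxabs M *m ones k); set Y := M *m lam; rewrite !mxE ler_norml;
  move=> ? ? /andP[? ?]; lra.
Qed.

Theorem proposition5p2 (R : realFieldType) (dx du nI : nat)
  (A : 'M[R]_dx) (B : 'M[R]_(dx, du))
  (ulo uhi : 'cV[R]_du) (xlo xhi : 'cV[R]_dx) (T : nat)
  (GI : 'M[R]_(dx, nI)) (alpha : 'cV[R]_dx) (gamma : 'cV[R]_nI)
  (beta : nat -> 'cV[R]_du) (Phi : nat -> 'M[R]_(du, nI)) :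
  vle ulo uhi ->
  (forall i : 'I_nI, 0 <= gamma i 0) ->
  (forall t : nat, (t <= T)%N ->
     let c := A ^+ t *m alpha + \sum_(s < t) (A ^+ (t - 1 - s)%N *m B *m beta s) in
     let M := A ^+ t *m GI *m diagv gamma
              + \sum_(s < t) (A ^+ (t - 1 - s)%N *m B *m Phi s) in
     vle xlo (c - mxabs M *m ones nI) /\ vle (c + mxabs M *m ones nI) xhi) ->
  (forall t : nat, (t < T)%N ->
     vle ulo (beta t - mxabs (Phi t) *m ones nI) /\
     vle (beta t + mxabs (Phi t) *m ones nI) uhi) ->
  forall x : 'cV[R]_dx,
    zonotope alpha (GI *m diagv gamma) x ->
    viab A B (box ulo uhi) (box xlo xhi) T x.
Proof.
move=> hu _ hx hU x [lam [hl ->]].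
have key : forall t, (t <= T)%N ->
  box xlo xhi (traj A B (alpha + GI *m diagv gamma *m lam)
                 (fun s => beta s + Phi s *m lam) t).
  move=> t ht; rewrite traj_formula Ssum_lin.
  have -> : A ^+ t *m (alpha + GI *m diagv gamma *m lam) + (@Ssum R dx du A B _ t beta + @Ssum R dx du A B _ t Phi *m lam)
     = (A ^+ t *m alpha + @Ssum R dx du A B _ t beta) + (A ^+ t *m GI *m diagv gamma + @Ssum R dx du A B _ t Phi) *m lam.
    by rewrite mulmxDr mulmxDl !mulmxA; rewrite -!addrA; congr (_ + _); rewrite addrC -addrA; congr (_ + _); rewrite addrC.
  by case: (hx t ht) => h1 h2; apply: box_of.
split; first by have := key 0%N (leq0n _).
exists (fun t => if (t < T)%N then beta t + Phi t *m lam else ulo); split.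
  move=> t _; case: ifP => ht.
    by case: (hU t ht) => h1 h2; exact: (@box_of R du nI (beta t) (Phi t) lam ulo uhi hl h1 h2).
  by split=> // i; exact: le_refl.
move=> t ht; rewrite (@traj_ext R dx du A B _ _ (fun s => beta s + Phi s *m lam)); first exact: key.
by move=> s hs; have -> : (s < T)%N by apply: leq_trans hs ht.
Qed.
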